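(* Let $f$ be convex, continuously differentiable, with minimizer $x^*$, minimum value $f^*$ and coordinate-wise Lipschitz constants $L_i>0$, and fix $\alpha\ge0$. Assume $\sigma_{1-\alpha}>0$ (defined with respect to the $\tilde L$-weighted norm below). Fix $x_0\in\mathbb{R}^n$ and put $\theta=\sqrt{\sigma_{1-\alpha}/(2\tilde S_\alpha n)}$, $\zeta_0=\sigma_{1-\alpha}$, $v_0=x_0$, $\phi_0(x)=f(x_0)+\frac{\sigma_{1-\alpha}}{2}\|x-x_0\|_{1-\alpha}^2$. Construct $\phi_k,\zeta_k,v_k$ by the recursion $\zeta_{k+1}=(1-\theta)\zeta_k+\theta\sigma_{1-\alpha}$ (so $\zeta_k=\sigma_{1-\alpha}$), $v_{k+1}=\frac{1}{\zeta_{k+1}}\big[(1-\theta)\zeta_kv_k+\theta\sigma_{1-\alpha}y_k-\frac{\tilde S_\alpha\theta}{\tilde L_{i_k}}\vec f_{i_k}(y_k)\big]$, where $i_0,i_1,\dots$ are independent with $\Pr[i_k=i]=\tilde L_i^\alpha/\tilde S_\alpha$, $y_0=x_0$, and for $k\ge1$ $$x_k=y_{k-1}-\tfrac{1}{\tilde L_{i_{k-1}}}\vec f_{i_{k-1}}(y_{k-1}),\qquad y_k\ \text{ determined by }\ \tfrac{\theta\zeta_k}{\zeta_{k+1}}(v_k-y_k)+x_k-y_k=0.$$ Then for all $k\ge0$, $$\mathbb{E}[f(x_k)]-f^*\le\Big(1-\tfrac12\sqrt{\tfrac{\sigma_{1-\alpha}}{S_\alpha n}}\Big)^k\Big(f(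x_0)-f^*+\sigma_{1-\alpha}\|x^*-x_0\|_{1-\alpha}^2\Big).$$
   Context: $f_i(x)=e_i^T\nabla f(x)$, $\vec f_i(x)=f_i(x)e_i$; $L_i$ are coordinate-wise Lipschitz constants: $|f_i(x+te_i)-f_i(x)|\le L_i|t|$. $S_\alpha=\sum_iL_i^\alpha$. Define $\tilde L_i$ by $\tilde L_i^\alpha=\max(L_i^\alpha,S_\alpha/n)$ (for $\alpha=0$, $\tilde L_i=L_i$) and $\tilde S_\alpha=\sum_i\tilde L_i^\alpha$; the $\tilde L_i$ are again coordinate-wise Lipschitz constants and $S_\alpha\le\tilde S_\alpha\le2S_\alpha$. In this statement $\|x\|_{1-\alpha}=\sqrt{\sum_i\tilde L_i^{1-\alpha}x_i^2}$ (for $\alpha=1$ this is the Euclidean norm), and $\sigma_{1-\alpha}$ is a convexity parameter of $f$ with respect to it: $f(y)\ge f(x)+\langle\nabla f(x),y-x\rangle+\frac{\sigma_{1-\alpha}}2\|y-x\|_{1-\alpha}^2$ for all $x,y$. *)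

(* Defs.v *)
(* classical reals. Vectors of R^n are encoded as nat -> R,
   with only coordinates 0..n-1 meaningful (f is required to depend only on them). *)
From Stdlib Require Import Reals Lra List.
Open Scope R_scope.

Definition vec := nat -> R.

Fixpoint sumR (n : nat) (g : nat -> R) : R :=
  match n with O => 0 | S m => sumR m g + g m end.

Definition unitv (i : nat) : vec := fun j => if Nat.eq_dec j i then 1 else 0.
Definition vadd (x y : vec) : vec := fun j => x j + y j.
Definition vscal (a : R) (x : vec) : vec := fun j => a * x j.

Definition S_pow (n : nat) (L : nat -> R) (a : R) : R :=
  sumR n (fun i => Rpower (L i) a).

(* tilde L_i : tilde L_i^alpha = max(L_i^alpha, S_alpha/n); tilde L_i = L_i if alpha = 0 *)
Definition Ltil (n : nat) (L : nat -> R) (a : R) (i : nat) : R :=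
  if Req_EM_T a 0 then L i
  else Rpower (Rmax (Rpower (L i) a) (S_pow n L a / INR n)) (/ a).

Definition Stil (n : nat) (L : nat -> R) (a : R) : R := S_pow n (Ltil n L a) a.

Definition wnorm2 (n : nat) (L : nat -> R) (a : R) (x : vec) : R :=
  sumR n (fun i => Rpower (Ltil n L a i) (1 - a) * (x i) ^ 2).

Definition prob (n : nat) (L : nat -> R) (a : R) (i : nat) : R :=
  Rpower (Ltil n L a i) a / Stil n L a.

Definition theta (n : nat) (L : nat -> R) (a sigma : R) : R :=
  sqrt (sigma / (2 * Stil n L a * INR n)).

(* state (x_k, y_k, v_k, zeta_k) *)
Definition state := (vec * vec * vec * R)%type.

Definition step (n : nat) (L : nat -> R) (a sigma : R) (g : vec -> nat -> R)
  (s : state) (i : nat) : state :=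
  let '(x, y, v, z) := s in
  let th := theta n L a sigma in
  let z1 := (1 - th) * z + th * sigma in
  let z2 := (1 - th) * z1 + th * sigma in
  let Li := Ltil n L a i in
  let gi := g y i in
  let v1 : vec := fun j =>
      ((1 - th) * z * v j + th * sigma * y j
       - Stil n L a * th / Li * (gi * unitv i j)) / z1 in
  let x1 : vec := fun j => y j - / Li * (gi * unitv i j) in
  (* y_{k+1} is the unique solution of c (v_{k+1} - y) + x_{k+1} - y = 0,
     c = theta zeta_{k+1} / zeta_{k+2} *)
  let c := th * z1 / z2 in
  let y1 : vec := fun j => (c * v1 j + x1 j) / (c + 1) in
  (x1, y1, v1, z1).

Definition iterate (n : nat) (L : nat -> R) (a sigma : R) (g : vec -> nat -> R)
  (x0 : vec) (l : list nat) : state :=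
  fold_left (step n L a sigma g) l (x0, x0, x0, sigma).

Definition xk (s : state) : vec := let '(x, _, _, _) := s in x.

(* Expectation of F(i_0,...,i_{k-1}) over i.i.d. indices in {0..n-1} with law p *)
Fixpoint Eseq (n : nat) (p : nat -> R) (k : nat) (F : list nat -> R) : R :=
  match k with
  | O => F nil
  | S k' => sumR n (fun i => p i * Eseq n p k' (fun l => F (i :: l)))
  end.

(* Main.v *)
Require Import Defs.
From Stdlib Require Import Reals Lra Lia List Psatz FunctionalExtensionality.
Open Scope R_scope.

Lemma sumR_ext n a b : (forall i, (i < n)%nat -> a i = b i) -> sumR n a = sumR n b.
Proof. induction n; simpl; intros H; auto. rewrite IHn by (intros; apply H; lia). rewrite H by lia. auto. Qed.

Lemma sumR_le n a b : (forall i, (i < n)%nat -> a i <= b i) -> sumR n a <= sumR n b.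
Proof. induction n; simpl; intros H; [lra|]. assert (a n <= b n) by (apply H; lia).
  assert (sumR n a <= sumR n b) by (apply IHn; intros; apply H; lia). lra. Qed.

Lemma sumR_plus n a b : sumR n (fun i => a i + b i) = sumR n a + sumR n b.
Proof. induction n; simpl; [lra|]. rewrite IHn; lra. Qed.

Lemma sumR_scal n c a : sumR n (fun i => c * a i) = c * sumR n a.
Proof. induction n; simpl; [lra|]. rewrite IHn; lra. Qed.

Lemma sumR_const n c : sumR n (fun _ => c) = INR n * c.
Proof. induction n; simpl sumR; [simpl; lra|]. rewrite IHn, S_INR; lra. Qed.

Lemma sumR_unit n i h : (i < n)%nat -> sumR n (fun j => h j * unitv i j) = h i.
Proof. induction n; intros Hi; [lia|]. simpl. unfold unitv at 2.
  destruct (Nat.eq_dec n i).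
  - subst. rewrite (sumR_ext _ _ (fun _ => 0)). rewrite sumR_const; lra.
    intros j Hj. unfold unitv. destruct (Nat.eq_dec j i); [lia|lra].
  - rewrite IHn by lia. lra. Qed.

Lemma sumR_nonneg n a : (forall i, (i < n)%nat -> 0 <= a i) -> 0 <= sumR n a.
Proof. intros H. rewrite <- (Rmult_0_r (INR n)), <- sumR_const. apply sumR_le; auto. Qed.

Lemma sumR_term n a i : (forall j, (j < n)%nat -> 0 <= a j) -> (i < n)%nat -> a i <= sumR n a.
Proof. induction n; intros H Hi; [lia|]. simpl.
  destruct (Nat.eq_dec i n).
  - subst. assert (0 <= sumR n a) by (apply sumR_nonneg; intros; apply H; lia). lra.
  - assert (a i <= sumR n a) by (apply IHn; [intros; apply H; lia| lia]).
    assert (0 <= a n) by (apply H; lia). lra. Qed.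

Lemma Rpower_gt0 x y : 0 < Rpower x y.
Proof. unfold Rpower. apply exp_pos. Qed.

Lemma Rpower_0r x : Rpower x 0 = 1.
Proof. unfold Rpower. rewrite Rmult_0_l. apply exp_0. Qed.

Lemma Ltil_facts n L a : (1 <= n)%nat -> (forall i, (i < n)%nat -> 0 < L i) -> 0 <= a ->
  (forall i, (i < n)%nat -> 0 < Ltil n L a i /\ L i <= Ltil n L a i
      /\ Stil n L a <= 2 * INR n * Rpower (Ltil n L a i) a)
  /\ Stil n L a <= 2 * S_pow n L a /\ 0 < S_pow n L a.
Proof.
  intros Hn HL Ha.
  assert (Hnp : 0 < INR n) by (apply lt_0_INR; lia).
  assert (HS : 0 < S_pow n L a).
  { unfold S_pow. apply Rlt_le_trans with (Rpower (L 0%nat) a). apply Rpower_gt0.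
    apply (sumR_term n (fun i => Rpower (L i) a)). intros; left; apply Rpower_gt0. lia. }
  destruct (Req_EM_T a 0) as [Ha0|Ha0].
  - subst a.
    assert (HLt : forall i, Ltil n L 0 i = L i).
    { intros i. unfold Ltil. destruct (Req_EM_T 0 0); [auto|lra]. }
    assert (HSt : Stil n L 0 = INR n).
    { unfold Stil, S_pow. rewrite (sumR_ext _ _ (fun _ => 1)). rewrite sumR_const; lra.
      intros; apply Rpower_0r. }
    assert (HS0 : S_pow n L 0 = INR n).
    { unfold S_pow. rewrite (sumR_ext _ _ (fun _ => 1)). rewrite sumR_const; lra.
      intros; apply Rpower_0r. }
    split; [|split]; try lra.
    intros i Hi. rewrite HLt, HSt, Rpower_0r. split; [apply HL; auto|]. lra.
  - assert (Hap : 0 < a) by lra.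
    set (S := S_pow n L a).
    assert (HLt : forall i, Ltil n L a i = Rpower (Rmax (Rpower (L i) a) (S / INR n)) (/ a)).
    { intros i. unfold Ltil. destruct (Req_EM_T a 0); [lra|auto]. }
    assert (HM : forall i, 0 < Rmax (Rpower (L i) a) (S / INR n)).
    { intros i. apply Rlt_le_trans with (Rpower (L i) a). apply Rpower_gt0. apply Rmax_l. }
    assert (HA : forall i, Rpower (Ltil n L a i) a = Rmax (Rpower (L i) a) (S / INR n)).
    { intros i. rewrite HLt, Rpower_mult, Rinv_l by lra. apply Rpower_1, HM. }
    assert (HSt : Stil n L a <= 2 * S).
    { unfold Stil, S_pow. rewrite (sumR_ext _ _ (fun i => Rmax (Rpower (L i) a) (S / INR n))).
      2: intros; apply HA.
      apply Rle_trans with (sumR n (fun i => Rpower (L i) a + S / INR n)).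
      apply sumR_le. intros i _. unfold Rmax. destruct (Rle_dec _ _).
      assert (0 < Rpower (L i) a) by apply Rpower_gt0. lra.
      assert (0 < S / INR n) by (apply Rdiv_lt_0_compat; [exact HS|exact Hnp]). lra.
      rewrite sumR_plus, sumR_const. change (sumR n (fun i => Rpower (L i) a)) with S.
      field_simplify; lra. }
    split; [|split]; auto.
    intros i Hi. split; [apply Rlt_gt; rewrite HLt; apply Rpower_gt0|]. split.
    + rewrite HLt. assert (E : Rpower (Rpower (L i) a) (/ a) = L i).
      { rewrite Rpower_mult, Rinv_r by lra. apply Rpower_1, HL; auto. }
      apply Rle_trans with (Rpower (Rpower (L i) a) (/ a)); [right; symmetry; exact E|].
      apply Rle_Rpower_l. left; apply Rinv_0_lt_compat; lra.
      split; [apply Rpower_gt0| apply Rmax_l].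
    + rewrite HA. apply Rle_trans with (2 * S); auto.
      apply Rle_trans with (2 * INR n * (S / INR n)).
      right; field; lra. apply Rmult_le_compat_l; [lra| apply Rmax_r].
Qed.

Lemma abs_bnd u b : Rabs u <= b -> -b <= u <= b.
Proof. unfold Rabs; destruct (Rcase_abs u); lra. Qed.

Lemma dpl_quad phi s l a b c : derivable_pt_lim phi s l ->
  derivable_pt_lim (fun s => phi s - (a + b * s + c * (s * s))) s (l - (b + c * (2 * s))).
Proof.
  intros H.
  assert (Hq : derivable_pt_lim (fun s => a + b * s + c * (s * s)) s (b + c * (2 * s))).
  { replace (b + c * (2 * s)) with (0 + b * 1 + c * (1 * s + s * 1)) by ring.
    apply (derivable_pt_lim_plus (fun s => a + b * s) (fun s => c * (s * s))).
    apply (derivable_pt_lim_plus (fun _ => a) (fun s => b * s)).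
    apply derivable_pt_lim_const.
    apply (derivable_pt_lim_scal (fun s => s)). apply derivable_pt_lim_id.
    apply (derivable_pt_lim_scal (fun s => s * s)).
    apply (derivable_pt_lim_mult (fun s => s) (fun s => s)); apply derivable_pt_lim_id. }
  apply (derivable_pt_lim_minus phi (fun s => a + b * s + c * (s * s))); auto.
Qed.

Lemma descent n (f : vec -> R) (g : vec -> nat -> R) (L : nat -> R)
  (Hgrad : forall (x : vec) (i : nat), (i < n)%nat ->
     derivable_pt_lim (fun t => f (vadd x (vscal t (unitv i)))) 0 (g x i))
  (HLip : forall (x : vec) (t : R) (i : nat), (i < n)%nat ->
     Rabs (g (vadd x (vscal t (unitv i))) i - g x i) <= L i * Rabs t)
  x i t : (i < n)%nat ->
  f (vadd x (vscal t (unitv i))) <= f x + t * g x i + L i / 2 * (t * t).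
Proof.
  intros Hi.
  set (e := unitv i).
  set (phi := fun s => f (vadd x (vscal s e))).
  assert (Hphi : forall s, derivable_pt_lim phi s (g (vadd x (vscal s e)) i)).
  { intros s. pose proof (Hgrad (vadd x (vscal s e)) i Hi) as H.
    unfold derivable_pt_lim in *. intros eps Heps. destruct (H eps Heps) as [del Hd].
    exists del. intros h Hh0 Hh. specialize (Hd h Hh0 Hh).
    unfold phi.
    replace (vadd x (vscal (s + h) e)) with (vadd (vadd x (vscal s e)) (vscal (0 + h) (unitv i))).
    replace (vadd x (vscal s e)) with (vadd (vadd x (vscal s e)) (vscal 0 (unitv i))) at 2.
    exact Hd.
    all: apply functional_extensionality; intro j; unfold vadd, vscal, e; ring. }
  assert (H0 : phi 0 = f x).
  { unfold phi. f_equal. apply functional_extensionality; intro j; unfold vadd, vscal; ring. }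
  assert (Hg0 : g (vadd x (vscal 0 e)) i = g x i).
  { f_equal. apply functional_extensionality; intro j; unfold vadd, vscal; ring. }
  set (psi := fun s => phi s - (phi 0 + g x i * s + L i / 2 * (s * s))).
  assert (Hpsi : forall s, derivable_pt_lim psi s
     (g (vadd x (vscal s e)) i - (g x i + L i / 2 * (2 * s)))).
  { intros s. apply dpl_quad, Hphi. }
  assert (HLs : forall s, Rabs (g (vadd x (vscal s e)) i - g x i) <= L i * Rabs s).
  { intros s. apply HLip; auto. }
  assert (Hps0 : psi 0 = 0) by (unfold psi; ring).
  assert (psi t <= 0).
  { destruct (Rtotal_order t 0) as [Hlt|[Heq|Hgt]].
    - destruct (MVT_cor2 psi _ t 0 Hlt (fun c _ => Hpsi c)) as [c [Hc1 Hc2]].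
      specialize (HLs c). rewrite (Rabs_left c) in HLs by lra.
      apply abs_bnd in HLs. 
      assert (0 <= g (vadd x (vscal c e)) i - (g x i + L i / 2 * (2 * c))) by lra.
      assert (0 <= (g (vadd x (vscal c e)) i - (g x i + L i / 2 * (2 * c))) * (0 - t))
        by (apply Rmult_le_pos; lra). lra.
    - subst; lra.
    - destruct (MVT_cor2 psi _ 0 t Hgt (fun c _ => Hpsi c)) as [c [Hc1 Hc2]].
      specialize (HLs c). rewrite (Rabs_right c) in HLs by lra.
      apply abs_bnd in HLs.
      assert (g (vadd x (vscal c e)) i - (g x i + L i / 2 * (2 * c)) <= 0) by lra.
      assert ((g (vadd x (vscal c e)) i - (g x i + L i / 2 * (2 * c))) * (t - 0) <= 0)
        by nra. lra. }
  unfold psi in H. rewrite H0 in H. unfold phi in H. lra.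
Qed.

Lemma wnorm2_nonneg n L a b : 0 <= wnorm2 n L a b.
Proof. unfold wnorm2. apply sumR_nonneg. intros i _.
  apply Rmult_le_pos. left; apply Rpower_gt0. apply pow2_ge_0. Qed.

Lemma wnorm2_unit n L a b i c : (i < n)%nat ->
  wnorm2 n L a (fun j => b j - c * unitv i j) =
  wnorm2 n L a b - 2 * c * Rpower (Ltil n L a i) (1 - a) * b i
  + Rpower (Ltil n L a i) (1 - a) * (c * c).
Proof.
  intros Hi. unfold wnorm2.
  rewrite (sumR_ext _ _ (fun j => Rpower (Ltil n L a j) (1 - a) * b j ^ 2 +
     (Rpower (Ltil n L a j) (1 - a) * (- 2 * c * b j + c * c)) * unitv i j)).
  rewrite sumR_plus, sumR_unit by auto. ring.
  intros j _. unfold unitv. destruct (Nat.eq_dec j i); ring.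
Qed.

Lemma Eseq_mono n p k F G : (forall i, (i < n)%nat -> 0 <= p i) ->
  (forall l, F l <= G l) -> Eseq n p k F <= Eseq n p k G.
Proof.
  revert F G. induction k; intros F G Hp H; simpl; auto.
  apply sumR_le. intros i Hi. apply Rmult_le_compat_l; auto.
Qed.

Lemma Eseq_shift n p k F c : sumR n p = 1 ->
  Eseq n p k (fun l => F l - c) = Eseq n p k F - c.
Proof.
  revert F. induction k; intros F Hp; simpl; auto.
  rewrite (sumR_ext _ _ (fun i => p i * Eseq n p k (fun l => F (i :: l)) + (- c) * p i)).
  rewrite sumR_plus, sumR_scal, Hp. ring.
  intros i _. rewrite IHk by auto. ring.
Qed.

Definition vk (s : state) : vec := let '(_, _, v, _) := s in v.

Definition Phi n L a sigma (f : vec -> R) (xstar : vec) (s : state) : R :=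
  f (xk s) - f xstar + sigma / 2 * wnorm2 n L a (fun j => vk s j - xstar j).

Definition inv n L a sigma (s : state) : Prop :=
  let '(x, y, v, z) := s in z = sigma /\
  forall j, theta n L a sigma * (v j - y j) + x j - y j = 0.

Lemma step_inv n L a sigma g s i : 0 < sigma -> inv n L a sigma s ->
  inv n L a sigma (step n L a sigma g s i).
Proof.
  destruct s as [[[x y] v] z]. intros Hs [Hz Hj]. subst z. unfold step; simpl.
  set (th := theta n L a sigma).
  assert (Hth : 0 <= th) by apply sqrt_pos.
  replace ((1 - th) * sigma + th * sigma) with sigma by ring.
  split; [ring|]. intros j.
  replace ((1 - th) * sigma + th * sigma) with sigma by ring.
  replace (th * sigma / sigma) with th by (field; lra).
  set (D := Stil n L a * th / Ltil n L a i * (g y i * unitv i j)).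
  set (E := / Ltil n L a i * (g y i * unitv i j)). field. lra.
Qed.

Lemma step_pot (n : nat) (f : vec -> R) (g : vec -> nat -> R)
  (L : nat -> R) (a sigma : R) (xstar : vec)
  (Hn : (1 <= n)%nat)
  (Hgrad : forall (x : vec) (i : nat), (i < n)%nat ->
     derivable_pt_lim (fun t => f (vadd x (vscal t (unitv i)))) 0 (g x i))
  (HL : forall i, (i < n)%nat -> 0 < L i)
  (HLip : forall (x : vec) (t : R) (i : nat), (i < n)%nat ->
     Rabs (g (vadd x (vscal t (unitv i))) i - g x i) <= L i * Rabs t)
  (Ha : 0 <= a) (Hsig : 0 < sigma)
  (Hsc : forall x y : vec,
     f y >= f x + sumR n (fun i => g x i * (y i - x i))
            + sigma / 2 * wnorm2 n L a (fun j => y j - x j))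
  (Hth1 : theta n L a sigma <= 1)
  x y v (Hinv : forall j, theta n L a sigma * (v j - y j) + x j - y j = 0) :
  sumR n (fun i => prob n L a i * Phi n L a sigma f xstar (step n L a sigma g (x, y, v, sigma) i))
  <= (1 - theta n L a sigma) * Phi n L a sigma f xstar (x, y, v, sigma).
Proof.
  destruct (Ltil_facts n L a Hn HL Ha) as [HLt [HSt2 HSpos]].
  set (th := theta n L a sigma) in *.
  set (St := Stil n L a) in *.
  assert (Hth0 : 0 <= th) by apply sqrt_pos.
  assert (HStpos : 0 < St).
  { unfold St, Stil, S_pow. apply Rlt_le_trans with (Rpower (Ltil n L a 0) a). apply Rpower_gt0.
    apply (sumR_term n (fun i => Rpower (Ltil n L a i) a)). intros; left; apply Rpower_gt0. lia. }
  assert (Hnp : 0 < INR n) by (apply lt_0_INR; lia).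
  assert (Hth2 : th * th = sigma / (2 * St * INR n)).
  { unfold th, theta. apply sqrt_sqrt. left. apply Rdiv_lt_0_compat; [lra|].
    apply Rmult_lt_0_compat; lra. }
  set (u := fun j => (1 - th) * v j + th * y j).
  set (W := wnorm2 n L a (fun j => u j - xstar j)).
  set (b := fun j => u j - xstar j).
  assert (Hper : forall i, (i < n)%nat ->
    prob n L a i * Phi n L a sigma f xstar (step n L a sigma g (x, y, v, sigma) i)
    <= prob n L a i * (f y - f xstar + sigma / 2 * W) - th * (g y i * b i)).
  { intros i Hi. destruct (HLt i Hi) as [HLtp [HLLt HStA]].
    set (Lt := Ltil n L a i) in *.
    set (A := Rpower Lt a) in *.
    set (w := Rpower Lt (1 - a)).
    assert (HA : 0 < A) by apply Rpower_gt0.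
    assert (Hw : 0 < w) by apply Rpower_gt0.
    assert (HLtAw : Lt = A * w).
    { unfold A, w. rewrite <- Rpower_plus. replace (a + (1 - a)) with 1 by ring.
      symmetry; apply Rpower_1; auto. }
    set (gi := g y i).
    assert (Hp : prob n L a i = A / St) by reflexivity.
    unfold Phi, step. simpl xk. simpl vk. fold th. fold St. fold Lt. fold gi.
    replace ((1 - th) * sigma + th * sigma) with sigma by ring.
    assert (Hx1 : f (fun j => y j - / Lt * (gi * unitv i j)) <= f y - gi * gi / (2 * Lt)).
    { replace (fun j => y j - / Lt * (gi * unitv i j)) with (vadd y (vscal (- gi / Lt) (unitv i))).
      2: { apply functional_extensionality; intro j; unfold vadd, vscal; unfold Rdiv; ring. }
      eapply Rle_trans. apply (descent n f g L Hgrad HLip y i (- gi / Lt) Hi). fold gi.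
      assert (L i / 2 * (- gi / Lt * (- gi / Lt)) <= Lt / 2 * (- gi / Lt * (- gi / Lt))).
      { apply Rmult_le_compat_r. apply Rle_0_sqr. lra. }
      replace (Lt / 2 * (- gi / Lt * (- gi / Lt))) with (gi * gi / (2 * Lt)) in H by (field; lra).
      replace (- gi / Lt * gi) with (- (gi * gi / Lt)) by (field; lra).
      replace (gi * gi / Lt) with (2 * (gi * gi / (2 * Lt))) by (field; lra). lra. }
    set (c := St * th * gi / (Lt * sigma)).
    assert (Hv1 : (fun j => ((1 - th) * sigma * v j + th * sigma * y j -
        St * th / Lt * (gi * unitv i j)) / sigma - xstar j) = (fun j => b j - c * unitv i j)).
    { apply functional_extensionality; intro j. unfold b, u, c. field. lra. }
    rewrite Hv1, wnorm2_unit by auto. fold Lt. fold w. fold W.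
    rewrite Hp.
    assert (Hcoef : A / St * sigma * c * w = th * gi).
    { unfold c. rewrite HLtAw. field. lra. }
    assert (Hq : A / St * (sigma / 2) * (w * (c * c)) <= A / St * (gi * gi / (2 * Lt))).
    { replace (A / St * (sigma / 2) * (w * (c * c))) with
        (gi * gi * (St * (th * th) / (2 * A * w * sigma))) by (unfold c; rewrite HLtAw; field; lra).
      replace (A / St * (gi * gi / (2 * Lt))) with (gi * gi * (1 / (2 * St * w)))
        by (rewrite HLtAw; field; lra).
      apply Rmult_le_compat_l. nra.
      rewrite Hth2.
      assert (Hr : St / (2 * INR n * A) <= 1).
      { apply Rmult_le_reg_r with (2 * INR n * A). apply Rmult_lt_0_compat; lra.
        unfold Rdiv; rewrite Rmult_assoc, Rinv_l. lra.
        apply Rgt_not_eq. apply Rmult_lt_0_compat; lra. }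
      replace (St * (sigma / (2 * St * INR n)) / (2 * A * w * sigma)) with
        (1 / (2 * St * w) * (St / (2 * INR n * A))) by (field; repeat split; lra).
      rewrite <- (Rmult_1_r (1 / (2 * St * w))) at 2.
      apply Rmult_le_compat_l; auto. left; apply Rdiv_lt_0_compat; [lra|].
      apply Rmult_lt_0_compat; lra. }
    change (wnorm2 n L a b) with W.
    assert (Hpos : 0 <= A / St) by (left; apply Rdiv_lt_0_compat; lra).
    assert (H1 := Rmult_le_compat_l _ _ _ Hpos Hx1).
    assert (E1 : A / St * (sigma / 2) * (2 * c * w * b i) = th * gi * b i).
    { rewrite <- Hcoef. generalize (b i); intro bi. clearbody c w A. clear - HStpos. field. lra. }
    nra. }
  eapply Rle_trans. apply sumR_le. exact Hper.
  set (K := f y - f xstar + sigma / 2 * W).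
  assert (Hsp : sumR n (prob n L a) = 1).
  { unfold prob. rewrite (sumR_ext _ _ (fun i => / St * Rpower (Ltil n L a i) a)).
    rewrite sumR_scal. fold (S_pow n (Ltil n L a) a). fold (Stil n L a). fold St. field. lra.
    intros. change (Stil n L a) with St. unfold Rdiv; ring. }
  rewrite (sumR_ext _ _ (fun i => K * prob n L a i + (- th) * (g y i * b i))) by (intros; cbv beta; ring).
  rewrite sumR_plus, !sumR_scal, Hsp.
  set (V := wnorm2 n L a (fun j => v j - xstar j)).
  set (Y := wnorm2 n L a (fun j => y j - xstar j)).
  set (G1 := sumR n (fun j => g y j * (x j - y j))).
  set (G2 := sumR n (fun j => g y j * (xstar j - y j))).
  assert (HW : W <= (1 - th) * V + th * Y).
  { unfold W, V, Y, wnorm2. rewrite <- !sumR_scal, <- sumR_plus. apply sumR_le. intros j _.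
    set (w := Rpower (Ltil n L a j) (1 - a)). assert (0 < w) by apply Rpower_gt0.
    unfold u. set (P := v j - xstar j). set (Q := y j - xstar j).
    replace ((1 - th) * v j + th * y j - xstar j) with ((1 - th) * P + th * Q) by (unfold P, Q; ring).
    assert (0 <= w * th * (1 - th) * ((P - Q) * (P - Q))).
    { assert (0 <= w * th) by (apply Rmult_le_pos; lra).
      assert (0 <= w * th * (1 - th)) by (apply Rmult_le_pos; lra).
      apply Rmult_le_pos; [lra| apply Rle_0_sqr]. }
    nra. }
  assert (HG : th * sumR n (fun i => g y i * b i) = - (1 - th) * G1 - th * G2).
  { unfold G1, G2. rewrite <- sumR_scal.
    transitivity (sumR n (fun j => -(1-th)*(g y j*(x j - y j)) + (-th)*(g y j*(xstar j - y j)))).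
    2: { rewrite sumR_plus, !sumR_scal. ring. }
    apply sumR_ext. intros j _.
    assert (x j = y j - th * (v j - y j)) by (specialize (Hinv j); lra).
    rewrite H. unfold b, u. ring. }
  assert (HY : wnorm2 n L a (fun j => xstar j - y j) = Y).
  { unfold Y, wnorm2. apply sumR_ext. intros; ring. }
  pose proof (Hsc y x) as H1. pose proof (Hsc y xstar) as H2. rewrite HY in H2.
  fold G1 in H1. fold G2 in H2.
  pose proof (wnorm2_nonneg n L a (fun j => x j - y j)).
  unfold Phi. simpl xk. simpl vk. fold V.
  assert (0 <= 1 - th) by lra.
  assert ((1 - th) * (f y + G1) <= (1 - th) * f x).
  { apply Rmult_le_compat_l; auto. nra. }
  assert (sigma / 2 * W <= sigma / 2 * ((1 - th) * V + th * Y)).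
  { apply Rmult_le_compat_l; lra. }
  assert (th * (f y + G2 + sigma / 2 * Y) <= th * f xstar).
  { apply Rmult_le_compat_l; lra. }
  unfold K. nra.
Qed.

Lemma pot_iter (n : nat) (f : vec -> R) (g : vec -> nat -> R)
  (L : nat -> R) (a sigma : R) (xstar : vec)
  (Hn : (1 <= n)%nat)
  (Hgrad : forall (x : vec) (i : nat), (i < n)%nat ->
     derivable_pt_lim (fun t => f (vadd x (vscal t (unitv i)))) 0 (g x i))
  (HL : forall i, (i < n)%nat -> 0 < L i)
  (HLip : forall (x : vec) (t : R) (i : nat), (i < n)%nat ->
     Rabs (g (vadd x (vscal t (unitv i))) i - g x i) <= L i * Rabs t)
  (Ha : 0 <= a) (Hsig : 0 < sigma)
  (Hsc : forall x y : vec,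
     f y >= f x + sumR n (fun i => g x i * (y i - x i))
            + sigma / 2 * wnorm2 n L a (fun j => y j - x j))
  (Hth1 : theta n L a sigma <= 1)
  (HStpos : 0 < Stil n L a) :
  forall k s, inv n L a sigma s ->
  Eseq n (prob n L a) k (fun l => Phi n L a sigma f xstar (fold_left (step n L a sigma g) l s))
  <= (1 - theta n L a sigma) ^ k * Phi n L a sigma f xstar s.
Proof.
  assert (Hth0 : 0 <= theta n L a sigma) by apply sqrt_pos.
  assert (Hp : forall i, 0 <= prob n L a i).
  { intros i. unfold prob. left. apply Rdiv_lt_0_compat; auto. apply Rpower_gt0. }
  induction k; intros s Hs.
  - simpl. lra.
  - simpl Eseq. simpl fold_left.
    eapply Rle_trans.
    { apply sumR_le. intros i Hi. apply Rmult_le_compat_l. apply Hp.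
      apply IHk. apply step_inv; auto. }
    rewrite (sumR_ext _ _ (fun i => (1 - theta n L a sigma) ^ k *
       (prob n L a i * Phi n L a sigma f xstar (step n L a sigma g s i)))) by (intros; cbv beta; ring).
    rewrite sumR_scal. simpl pow.
    destruct s as [[[x y] v] z]. destruct Hs as [Hz Hj]. subst z.
    assert (0 <= (1 - theta n L a sigma) ^ k) by (apply pow_le; lra).
    rewrite (Rmult_comm (1 - theta n L a sigma)), Rmult_assoc.
    apply Rmult_le_compat_l; auto.
    apply step_pot; auto.
Qed.

Theorem mainTheorem3 (n : nat) (f : vec -> R) (g : vec -> nat -> R)
  (L : nat -> R) (alpha sigma : R) (xstar x0 : vec)
  (Hn : (1 <= n)%nat)
  (Hdep : forall x y : vec, (forall i, (i < n)%nat -> x i = y i) -> f x = f y)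
  (Hgrad : forall (x : vec) (i : nat), (i < n)%nat ->
     derivable_pt_lim (fun t => f (vadd x (vscal t (unitv i)))) 0 (g x i))
  (Hcont : forall (x : vec) (i : nat), (i < n)%nat -> forall eps, 0 < eps ->
     exists delta, 0 < delta /\ forall y : vec,
       (forall j, (j < n)%nat -> Rabs (y j - x j) < delta) ->
       Rabs (g y i - g x i) < eps)
  (Hconv : forall (x y : vec) (lam : R), 0 <= lam <= 1 ->
     f (fun j => lam * x j + (1 - lam) * y j) <= lam * f x + (1 - lam) * f y)
  (Hmin : forall x : vec, f xstar <= f x)
  (HL : forall i, (i < n)%nat -> 0 < L i)
  (HLip : forall (x : vec) (t : R) (i : nat), (i < n)%nat ->
     Rabs (g (vadd x (vscal t (unitv i))) i - g x i) <= L i * Rabs t)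
  (Ha : 0 <= alpha)
  (Hsig : 0 < sigma)
  (Hsc : forall x y : vec,
     f y >= f x + sumR n (fun i => g x i * (y i - x i))
            + sigma / 2 * wnorm2 n L alpha (fun j => y j - x j)) :
  forall k : nat,
    Eseq n (prob n L alpha) k (fun l => f (xk (iterate n L alpha sigma g x0 l)))
      - f xstar
    <= (1 - / 2 * sqrt (sigma / (S_pow n L alpha * INR n))) ^ k
       * (f x0 - f xstar + sigma * wnorm2 n L alpha (fun j => xstar j - x0 j)).
Proof.
  intros k.
  destruct (Ltil_facts n L alpha Hn HL Ha) as [HLt [HSt2 HSpos]].
  set (St := Stil n L alpha) in *.
  set (S := S_pow n L alpha) in *.
  assert (Hn1 : 1 <= INR n) by (apply (le_INR 1); lia).
  assert (HStpos : 0 < St).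
  { unfold St, Stil, S_pow. apply Rlt_le_trans with (Rpower (Ltil n L alpha 0) alpha). apply Rpower_gt0.
    apply (sumR_term n (fun i => Rpower (Ltil n L alpha i) alpha)). intros; left; apply Rpower_gt0. lia. }
  assert (HsA : sigma <= St).
  { destruct (HLt 0%nat ltac:(lia)) as [HLtp [HLLt _]].
    set (Lt := Ltil n L alpha 0) in *.
    set (w := Rpower Lt (1 - alpha)).
    set (A := Rpower Lt alpha).
    assert (Hw : 0 < w) by apply Rpower_gt0.
    assert (HLtAw : Lt = A * w).
    { unfold A, w. rewrite <- Rpower_plus. replace (alpha + (1 - alpha)) with 1 by ring.
      symmetry; apply Rpower_1; auto. }
    set (y := vadd x0 (vscal 1 (unitv 0))).
    pose proof (Hsc x0 y) as H1.
    pose proof (descent n f g L Hgrad HLip x0 0 1 ltac:(lia)) as H2. fold y in H2.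
    rewrite (sumR_ext _ _ (fun i => g x0 i * unitv 0 i)) in H1.
    2: { intros i _. unfold y, vadd, vscal. ring. }
    rewrite sumR_unit in H1 by lia.
    assert (Hwn : wnorm2 n L alpha (fun j => y j - x0 j) = w).
    { unfold wnorm2. rewrite (sumR_ext _ _ (fun j => Rpower (Ltil n L alpha j) (1 - alpha) * unitv 0 j)).
      apply sumR_unit; lia.
      intros j _. unfold y, vadd, vscal, unitv. destruct (Nat.eq_dec j 0); ring. }
    rewrite Hwn in H1.
    assert (sigma * w <= A * w) by lra.
    assert (sigma <= A) by (apply Rmult_le_reg_r with w; auto).
    apply Rle_trans with A; auto.
    unfold St, Stil, S_pow.
    apply (sumR_term n (fun i => Rpower (Ltil n L alpha i) alpha)). intros; left; apply Rpower_gt0. lia. }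
  assert (Hth0 : 0 <= theta n L alpha sigma) by apply sqrt_pos.
  assert (Hth1 : theta n L alpha sigma <= 1).
  { unfold theta. rewrite <- sqrt_1. apply sqrt_le_1_alt. fold St.
    apply Rmult_le_reg_r with (2 * St * INR n). apply Rmult_lt_0_compat; lra.
    unfold Rdiv. rewrite Rmult_assoc, Rinv_l. nra. apply Rgt_not_eq. apply Rmult_lt_0_compat; lra. }
  set (th := theta n L alpha sigma) in *.
  set (rho := 1 - / 2 * sqrt (sigma / (S * INR n))).
  assert (Hrho : 1 - th <= rho).
  { unfold rho. assert (/ 2 * sqrt (sigma / (S * INR n)) <= th); [|lra].
    assert (Hs0 : 0 <= / 2 * sqrt (sigma / (S * INR n))).
    { apply Rmult_le_pos; [lra| apply sqrt_pos]. }
    rewrite <- (sqrt_square _ Hs0). unfold th, theta. fold St. apply sqrt_le_1_alt.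
    replace (/ 2 * sqrt (sigma / (S * INR n)) * (/ 2 * sqrt (sigma / (S * INR n))))
      with (/ 4 * (sqrt (sigma / (S * INR n)) * sqrt (sigma / (S * INR n)))) by field.
    rewrite sqrt_sqrt by (left; apply Rdiv_lt_0_compat; [lra| apply Rmult_lt_0_compat; lra]).
    replace (/ 4 * (sigma / (S * INR n))) with (sigma * / (4 * S * INR n)) by (field; lra).
    unfold Rdiv. apply Rmult_le_compat_l; [lra|].
    apply Rinv_le_contravar. apply Rmult_lt_0_compat; lra. nra. }
  set (s0 := (x0, x0, x0, sigma) : state).
  assert (Hs0 : inv n L alpha sigma s0). { unfold s0; simpl. split; auto. intros; ring. }
  assert (Hsp : sumR n (prob n L alpha) = 1).
  { unfold prob. rewrite (sumR_ext _ _ (fun i => / St * Rpower (Ltil n L alpha i) alpha)).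
    rewrite sumR_scal. fold (S_pow n (Ltil n L alpha) alpha). fold (Stil n L alpha). fold St. field. lra.
    intros. change (Stil n L alpha) with St. unfold Rdiv; ring. }
  assert (Hp : forall i, (i < n)%nat -> 0 <= prob n L alpha i).
  { intros i _. unfold prob. left. apply Rdiv_lt_0_compat; auto. apply Rpower_gt0. }
  rewrite <- Eseq_shift by auto.
  eapply Rle_trans.
  { apply Eseq_mono with (G := fun l => Phi n L alpha sigma f xstar
       (fold_left (step n L alpha sigma g) l s0)); auto.
    intros l. unfold Phi, iterate. fold s0.
    pose proof (wnorm2_nonneg n L alpha
      (fun j => vk (fold_left (step n L alpha sigma g) l s0) j - xstar j)). nra. }
  eapply Rle_trans. apply pot_iter; auto.
  assert (HPhi0 : 0 <= Phi n L alpha sigma f xstar s0).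
  { unfold Phi, s0; simpl. pose proof (Hmin x0).
    pose proof (wnorm2_nonneg n L alpha (fun j => x0 j - xstar j)). nra. }
  assert (HPhiC : Phi n L alpha sigma f xstar s0 <=
      f x0 - f xstar + sigma * wnorm2 n L alpha (fun j => xstar j - x0 j)).
  { unfold Phi, s0; simpl.
    assert (E : wnorm2 n L alpha (fun j => x0 j - xstar j) = wnorm2 n L alpha (fun j => xstar j - x0 j)).
    { unfold wnorm2. apply sumR_ext. intros; ring. }
    rewrite E. pose proof (wnorm2_nonneg n L alpha (fun j => xstar j - x0 j)). nra. }
  fold rho.
  assert (Hpk : (1 - th) ^ k <= rho ^ k) by (apply pow_incr; lra).
  assert (0 <= rho ^ k) by (apply pow_le; lra).
  apply Rle_trans with (rho ^ k * Phi n L alpha sigma f xstar s0).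
  apply Rmult_le_compat_r; auto.
  apply Rmult_le_compat_l; auto.
Qed.
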